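(* Let $G$ be a finite permutation group acting quasi-transitively on a finite set $\Omega$, with constant $t>1$, and suppose $G$ is not transitive on $\Omega$. Let $\Delta_1,\dots,\Delta_r$ ($r>1$) be the $G$-orbits on $\Omega$, fix $\alpha_i\in\Delta_i$ for each $i$, and put $d_i=|G_{\alpha_i}|/t$. Then $d_1\cdot|\Delta_1|=d_i\cdot|\Delta_i|$ for all $i=1,\dots,r$, and the orbit sizes $|\Delta_1|,\dots,|\Delta_r|$ are pairwise distinct.
   Context: A finite permutation group $G$ on a finite set $\Omega$ is called quasi-transitive if there is a natural number $t>1$ such that $|G_{\alpha\beta}|=t$ for all two-element subsets $\{\alpha,\beta\}\subseteq\Omega$, where $G_{\alpha\beta}$ denotes the pointwise stabiliser of $\alpha$ and $\beta$ in $G$, and $G_\alpha$ the stabiliser of $\alpha$. *)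

(* Defs.v *)
From HB Require Import structures.
From mathcomp Require Import all_boot all_fingroup.
Set Implicit Arguments. Unset Strict Implicit. Unset Printing Implicit Defensive.
Local Open Scope group_scope.

Definition quasi_transitive_with (T : finType) (G : {group {perm T}}) (t : nat) :=
  1 < t /\ forall a b : T, a != b -> #|'C_G([set a; b] | 'P)| = t.

(* Main.v *)
Require Import Defs.
From HB Require Import structures.
From mathcomp Require Import all_boot all_fingroup.
Set Implicit Arguments. Unset Strict Implicit. Unset Printing Implicit Defensive.


Section S.
Variables (T : finType) (G : {group {perm T}}) (t : nat).
Hypothesis qt : quasi_transitive_with G t.
Local Open Scope group_scope.
Local Open Scope nat_scope.

Lemma stab2 a c : ('C_('C_G[a | 'P])[c | 'P] = 'C_G([set a; c] | 'P))%g.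
Proof. by rewrite -setIA -astabU. Qed.

Lemma orbstab a c : a != c -> (#|orbit 'P 'C_G[a | 'P] c| * t = #|'C_G[a | 'P]|)%N.
Proof.
move=> ac; case: qt => _ h.
by rewrite -(h _ _ ac) -stab2 card_orbit_stab.
Qed.

Lemma dvd_stab a c : a != c -> t %| #|'C_G[a | 'P]|.
Proof. by move/orbstab=> <-; apply: dvdn_mull. Qed.

Lemma uniform_dvd (H : {group {perm T}}) (S : {set T}) d :
  [acts H, on S | 'P] -> (forall c, c \in S -> #|orbit 'P H c| = d) -> d %| #|S|.
Proof.
move=> aS hd; rewrite -(acts_sum_card_orbit aS); apply: dvdn_sum => X.
by case/imsetP=> c cS ->; rewrite hd.
Qed.


Lemma orbsize a c : a != c -> #|orbit 'P 'C_G[a | 'P] c| = #|'C_G[a | 'P]| %/ t.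
Proof.
move=> ac; case: (qt) => t1 _.
by rewrite -(orbstab ac) mulnK // ltnW.
Qed.

Lemma part1val a c : c \notin orbit 'P G a ->
  (#|'C_G[a | 'P]| %/ t) * #|orbit 'P G a| = #|G| %/ t.
Proof.
move=> cn.
have ac : a != c by apply: contraNneq cn => <-; apply: orbit_refl.
by rewrite divn_mulAC ?(dvd_stab ac) // mulnC card_orbit_stab.
Qed.

End S.

Lemma other (T : finType) (G : {group {perm T}}) a :
  ~~ [transitive G, on [set: T] | 'P] -> exists c, c \notin orbit 'P G a.
Proof.
move=> nt; apply/existsP; apply: contraR nt; rewrite negb_exists => /forallP h.
apply/imsetP; exists a; first by [].
by apply/setP=> x; rewrite inE; move: (h x); rewrite negbK.
Qed.

Theorem mainTheorem2 (T : finType) (G : {group {perm T}}) (t : nat) :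
  quasi_transitive_with G t ->
  ~~ [transitive G, on [set: T] | 'P] ->
  (forall a b : T,
      (#|'C_G[a | 'P]%g| %/ t) * #|orbit 'P G a| = (#|'C_G[b | 'P]%g| %/ t) * #|orbit 'P G b|)
  /\
  (forall a b : T, orbit 'P G a != orbit 'P G b -> #|orbit 'P G a| != #|orbit 'P G b|).
Proof.
move=> qt nt; split.
  move=> a b; have [c cn] := other a nt; have [e en] := other b nt.
  by rewrite (part1val qt cn) (part1val qt en).
move=> a b neq; apply/eqP => eqn.
have ba : b \notin orbit 'P G a.
  by apply: contra neq => /orbit_eqP ->.
have ab : a \notin orbit 'P G b by rewrite orbit_sym.
set Ga := 'C_G[a | 'P]%g.
have sGa : Ga \subset G by apply: subsetIl.
set d := #|Ga| %/ t.
have d1 : d %| #|orbit 'P G b|.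
  apply: (@uniform_dvd _ 'C_G[a | 'P]%G).
    by apply: subset_trans sGa _; apply: acts_orbit; apply: subsetT.
  move=> c cb; apply: (orbsize qt); apply: contraNneq ab => ->; exact: cb.
have d2 : d %| #|orbit 'P G a :\ a|.
  apply: (@uniform_dvd _ 'C_G[a | 'P]%G).
    apply: actsD; first by apply: subset_trans sGa _; apply: acts_orbit; apply: subsetT.
    by rewrite /= astabs_set1 subsetIr.
  by move=> c; rewrite !inE => /andP[ca _]; apply: (orbsize qt); rewrite eq_sym.
have dd : d %| 1.
  move: (dvdn_sub d1 d2); rewrite -eqn (cardsD1 a) orbit_refl /=.
  by rewrite add1n subSnn.
have [t1 _] := qt.
have cGa : #|Ga| = t.
  rewrite -(divnK (dvd_stab qt (_ : a != b))); last by apply: contraNneq ab => ->; apply: orbit_refl.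
  by move: dd; rewrite dvdn1 -/d => /eqP ->; rewrite mul1n.
have triv : Ga \subset [1 {perm T}]%g.
  apply/subsetP => g gG; rewrite inE; apply/eqP/permP => c; rewrite perm1.
  have [<-|ac] := eqVneq a c.
    by move: gG; rewrite inE => /andP[_ /astab1P].
  have := orbstab qt ac; rewrite cGa -{2}(mul1n t) => /eqP.
  rewrite eqn_mul2r (gtn_eqF (ltnW t1)) /= => /cards1P[x hx].
  have h1 : c \in orbit 'P Ga c by apply: orbit_refl.
  have h2 : 'P%act c g \in orbit 'P Ga c by apply: mem_orbit.
  by move: h1 h2; rewrite hx !inE => /eqP -> /eqP.
move: (subset_leq_card triv); rewrite cards1 cGa leqNgt t1.
done.
Qed.
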